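(* Consider the problem $\min_{x\in\mathbb{R}^n} F(x) := f(x)+\psi(x)+\phi(x)$ under the assumptions A.1–A.4 and with the algorithm CPGD described in the context. Then the iterates of CPGD satisfy, for every $k\ge 0$, $$F(x_{k+1}) \le F(x_k) - \frac{\eta_{\min}}{2}\,\|x_{k+1}-x_k\|^2 .$$
   Context: Block structure: $U\in\mathbb{R}^{n\times n}$ is a column permutation of the identity, $U=[U_1,\dots,U_N]$ with $U_i\in\mathbb{R}^{n\times n_i}$, $\sum_i n_i=n$; every $x\in\mathbb{R}^n$ is written uniquely as $x=\sum_i U_i x^{(i)}$ with $x^{(i)}=U_i^T x\in\mathbb{R}^{n_i}$, and $x^{\neq i}$ denotes the collection of blocks $x^{(j)}$, $j\neq i$. Assumptions: (A.1) $f:\mathbb{R}^n\to\mathbb{R}$ is differentiable and for each $i=1,\dots,N$ there is $L_i(x^{\neq i})$ (possibly depending on the other blocks) with $\|U_i^T(\nabla f(x+U_ih)-\nabla f(x))\|\le L_i(x^{\neq i})\|h\|$ for all $x\in\mathbb{R}^n$, $h\in\mathbb{R}^{n_i}$. (A.2) $\psi:\mathbb{R}^n\to\mathbb{R}$ is twice continuously differentiable (possibly nonconvex and nonseparable), and there are an integer $p\ge1$ and constants $H_{\psi_i}>0$ with $\|U_i^T\nabla^2\psi(y)U_i\|\le H_{\psi_i}\|y\|^p$ for all $y\in\mathbb{R}^n$, $i=1,\dots,N$. (A.3) $\phi$ is the indicator function of a nonempty closed convex set $Q=\prod_{i=1}^N Q_i$, $Q_i\subseteq\mathbb{R}^{n_i}$;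 $\phi_i$ denotes the indicator of $Q_i$, so $\phi(x)=\sum_i\phi_i(x^{(i)})$. (A.4) Problem $\min F$ has a solution, so $F^*=\min F>-\infty$. Let $h=f+\psi$. Algorithm CPGD: start from $x_0\in Q$. For $k\ge0$, set $x_{k,0}=x_k$ and for $i_k=1,\dots,N$ let $x_{k,i_k}=(x_{k+1}^{(1)},\dots,x_{k+1}^{(i_k)},x_k^{(i_k+1)},\dots,x_k^{(N)})$ (so $x_{k,N}=x_{k+1}$). At inner step $i_k$, with current point $x_{k,i_k-1}$ and $L_{i_k}:=L_{i_k}(x_{k,i_k-1}^{\neq i_k})$: (1) choose $H_{f,i_k}=\frac{L_{i_k}+\eta_{i_k}}{2}$ with $\eta_{i_k}>0$, and compute the nonnegative root $\alpha_{k,i_k}\ge0$ of $2^{p-1}H_{\psi_{i_k}}\alpha^{p+1}+(2^{p-1}H_{\psi_{i_k}}\|x_{k,i_k-1}\|^p+H_{f,i_k})\alpha=\|U_{i_k}^T\nabla h(x_{k,i_k-1})\|$; (2) set $H_{F,i_k}=2^{p-1}H_{\psi_{i_k}}\|x_{k,i_k-1}\|^p+2^{p-1}H_{\psi_{i_k}}\alpha_{k,i_k}^p+H_{f,i_k}$; (3) compute $d_{k,i_k}=\arg\min_{d\in\mathbb{R}^{n_{i_k}}}\langle U_{i_k}^T\nabla h(x_{k,i_k-1}),d\rangle+\frac{H_{F,i_k}}{2}\|d\|^2+\phi_{i_k}(x_k^{(i_k)}+d)$, i.e. $x_k^{(i_k)}+d_{k,i_k}=\mathrm{proj}_{Q_{i_k}}\big(x_k^{(i_k)}-\frac{1}{H_{F,i_k}}U_{i_k}^T\nabla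 h(x_{k,i_k-1})\big)$; (4) set $x_{k+1}^{(i_k)}=x_k^{(i_k)}+d_{k,i_k}$. Finally $\eta_{\min}:=\min_{k,i_k}\eta_{i_k}$ (the minimum over all outer iterations $k$ and inner steps $i_k$ of the parameters $\eta_{i_k}$). *)

(* Defs.v *)
From HB Require Import structures.
From mathcomp Require Import all_boot all_order all_algebra.
From mathcomp Require Import all_classical all_reals all_analysis.
Set Implicit Arguments. Unset Strict Implicit. Unset Printing Implicit Defensive.
Import Order.TTheory GRing.Theory Num.Theory.
Import numFieldNormedType.Exports.
Local Open Scope ring_scope.
Local Open Scope classical_set_scope.

Section Defs.
Variable R : realType.
Variables n N : nat.
(* Block structure: blk j = the block containing coordinate j.
   (Equivalent to a column permutation U = [U_1,...,U_N] of the identity.) *)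
Variable blk : 'I_n -> 'I_N.

Definition dot (u v : 'rV[R]_n) : R := \sum_(j < n) u ord0 j * v ord0 j.
Definition norm2 (v : 'rV[R]_n) : R := Num.sqrt (dot v v).

(* U_i U_i^T v : keep block i of v, zero the other blocks.  In particular
   ||U_i^T v|| = norm2 (blockP i v), and vectors d with blockP i d = d are the
   U_i d' with d' in R^{n_i}. *)
Definition blockP (i : 'I_N) (v : 'rV[R]_n) : 'rV[R]_n :=
  \row_j (if blk j == i then v ord0 j else 0).

(* ||U_i^T A U_i|| (spectral/operator norm of the i-th diagonal block of A). *)
Definition blk_opnorm (i : 'I_N) (A : 'M[R]_n) : R :=
  sup [set norm2 (blockP i (v *m A^T)) | v in
        [set v : 'rV[R]_n | blockP i v = v /\ norm2 v <= 1]].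

Definition inner (x : nat -> 'rV[R]_n) (k i : nat) : 'rV[R]_n :=
  \row_j (if (blk j < i)%N then x k.+1 ord0 j else x k ord0 j).

(* Q = prod_i Q_i, each Q_i encoded as a cylinder subset of R^n (depending only
   on block i), phi = indicator of Q. *)
Definition Qprod (Qi : 'I_N -> set 'rV[R]_n) : set 'rV[R]_n :=
  [set x | forall i, Qi i x].

Definition convex_set_R (Q : set 'rV[R]_n) : Prop :=
  forall x y (t : R), Q x -> Q y -> 0 <= t <= 1 -> Q (t *: x + (1 - t) *: y).

Definition Fobj (f psi : 'rV[R]_n -> R) (Q : set 'rV[R]_n) (x : 'rV[R]_n) : \bar R :=
  ((f x + psi x)%:E + (if `[< Q x >] then 0%E else +oo%E))%E.

Definition eta_min (eta : nat -> 'I_N -> R) : R :=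
  inf [set eta p.1 p.2 | p in [set: nat * 'I_N]].
End Defs.

(* Main.v *)
Require Import Defs.
From HB Require Import structures.
From mathcomp Require Import all_boot all_order all_algebra.
From mathcomp Require Import all_classical all_reals all_analysis.
From mathcomp Require Import ring lra.
Import Order.TTheory GRing.Theory Num.Theory.
Import numFieldNormedType.Exports.
Local Open Scope ring_scope.
Local Open Scope classical_set_scope.

Section LA.
Context {R : realType} {n N : nat} (blk : 'I_n -> 'I_N).
Implicit Types u v w : 'rV[R]_n.

Lemma dotC u v : dot u v = dot v u.
Proof. by apply: eq_bigr => j _; rewrite mulrC. Qed.
Lemma dotDl u v w : dot (u + v) w = dot u w + dot v w.
Proof. by rewrite /dot -big_split; apply: eq_bigr => j _; rewrite mxE mulrDl. Qed.
Lemma dotZl a u w : dot (a *: u) w = a * dot u w.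
Proof. by rewrite /dot mulr_sumr; apply: eq_bigr => j _; rewrite mxE mulrA. Qed.
Lemma dotNl u w : dot (- u) w = - dot u w.
Proof. by rewrite -scaleN1r dotZl mulN1r. Qed.
Lemma dotBl u v w : dot (u - v) w = dot u w - dot v w.
Proof. by rewrite dotDl dotNl. Qed.
Lemma dotDr u v w : dot w (u + v) = dot w u + dot w v.
Proof. by rewrite dotC dotDl !(dotC w). Qed.
Lemma dotZr a u w : dot w (a *: u) = a * dot w u.
Proof. by rewrite dotC dotZl dotC. Qed.
Lemma dotBr u v w : dot w (u - v) = dot w u - dot w v.
Proof. by rewrite dotC dotBl !(dotC w). Qed.
Lemma dot0l w : dot 0 w = 0.
Proof. by rewrite /dot big1 // => j _; rewrite mxE mul0r. Qed.
Lemma dot_ge0 v : 0 <= dot v v.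
Proof. by apply: sumr_ge0 => j _; rewrite -expr2 sqr_ge0. Qed.
Lemma dot_eq0 v : dot v v = 0 -> v = 0.
Proof.
move=> /eqP; rewrite psumr_eq0 => [/allP H|j _]; last by rewrite -expr2 sqr_ge0.
apply/matrixP => i j; rewrite (ord1 i) mxE.
have := H j (mem_index_enum j); rewrite /= mulf_eq0 orbb => /eqP //.
Qed.
Lemma norm2_ge0 v : 0 <= norm2 v.
Proof. exact: sqrtr_ge0. Qed.
Lemma norm2_sq v : norm2 v ^+ 2 = dot v v.
Proof. by rewrite sqr_sqrtr // dot_ge0. Qed.

Lemma sq_le (a b : R) : 0 <= b -> a ^+ 2 <= b ^+ 2 -> a <= b.
Proof. by move=> hb h; nra. Qed.

Lemma CS u v : dot u v <= norm2 u * norm2 v.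
Proof.
have [a0|a0] := eqVneq (norm2 u) 0.
  have : dot u u = 0 by rewrite -norm2_sq a0 expr2 mul0r.
  by move/dot_eq0 => ->; rewrite dot0l mulr_ge0 // norm2_ge0.
have [b0|b0] := eqVneq (norm2 v) 0.
  have : dot v v = 0 by rewrite -norm2_sq b0 expr2 mul0r.
  by move/dot_eq0 => ->; rewrite dotC dot0l mulr_ge0 // norm2_ge0.
have := dot_ge0 (norm2 v *: u - norm2 u *: v).
rewrite !(dotBl, dotBr, dotZl, dotZr) -!norm2_sq (dotC v u) => h.
have ha : 0 < norm2 u by rewrite lt_def a0 norm2_ge0.
have hb : 0 < norm2 v by rewrite lt_def b0 norm2_ge0.
have hab : 0 < norm2 u * norm2 v by apply: mulr_gt0.
set a := norm2 u in h ha hab *; set b := norm2 v in h hb hab *.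
nra.
Qed.

Lemma norm2Z a v : norm2 (a *: v) = `|a| * norm2 v.
Proof. by rewrite /norm2 dotZl dotZr mulrA -expr2 sqrtrM ?sqr_ge0 // sqrtr_sqr. Qed.

Lemma norm2D u v : norm2 (u + v) <= norm2 u + norm2 v.
Proof.
apply: sq_le; first by rewrite addr_ge0 // norm2_ge0.
rewrite norm2_sq dotDl !dotDr -!norm2_sq (dotC v u).
have := CS u v; nra.
Qed.

Lemma blockPE i v j : blockP blk i v ord0 j = if blk j == i then v ord0 j else 0.
Proof. by rewrite mxE. Qed.
Lemma blockPD i u v : blockP blk i (u + v) = blockP blk i u + blockP blk i v.
Proof. by apply/matrixP => a j; rewrite (ord1 a) !mxE; case: ifP; rewrite ?addr0. Qed.
Lemma blockPZ i a v : blockP blk i (a *: v) = a *: blockP blk i v.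
Proof. by apply/matrixP => b j; rewrite (ord1 b) !mxE; case: ifP; rewrite ?mulr0. Qed.
Lemma blockPN i v : blockP blk i (- v) = - blockP blk i v.
Proof. by rewrite -scaleN1r blockPZ scaleN1r. Qed.
Lemma blockPB i u v : blockP blk i (u - v) = blockP blk i u - blockP blk i v.
Proof. by rewrite blockPD blockPN. Qed.
Lemma blockPid i v : blockP blk i (blockP blk i v) = blockP blk i v.
Proof. by apply/matrixP => b j; rewrite (ord1 b) !mxE; case: (blk j == i). Qed.
Lemma blockP_ne i k v : i != k -> blockP blk i (blockP blk k v) = 0.
Proof.
move=> ik; apply/matrixP => b j; rewrite (ord1 b) !mxE.
case: eqP => // ->; by rewrite (negbTE ik).
Qed.
Lemma dot_blockP i u d : blockP blk i d = d -> dot u d = dot (blockP blk i u) d.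
Proof.
move=> <-; rewrite /dot; apply: eq_bigr => j _; rewrite !mxE.
by case: ifP; rewrite ?mulr0 ?mul0r.
Qed.
Lemma sum_blocks w : \sum_(i < N) dot (blockP blk i w) (blockP blk i w) = dot w w.
Proof.
rewrite /dot exchange_big /=; apply: eq_bigr => j _.
rewrite (bigD1 (blk j)) //= big1 ?addr0 => [|i /negbTE ne]; rewrite !mxE ?eqxx //.
by rewrite eq_sym ne mulr0.
Qed.
End LA.

Section AN.
Context {R : realType}.

Lemma quad_derive (a b t : R) :
  is_derive t 1 (fun s : R => a * s + b * (s * s)) (a + b * (2 * t)).
Proof.
have H : is_derive t (1:R) (a \*: (@id R) + b \*: ((@id R) * (@id R)))
   (a *: (1:R) + b *: (t *: (1:R) + t *: (1:R))) by apply: is_deriveD.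
have -> : (fun s : R => a * s + b * (s * s)) = (a \*: (@id R) + b \*: ((@id R) * (@id R))).
  by apply/funext => s.
apply: is_derive_eq H _.
rewrite /GRing.scale /=; ring.
Qed.

Lemma decr (g dg : R -> R) :
  (forall t : R, is_derive t (1:R) g (dg t)) ->
  (forall t : R, 0 < t < 1 -> dg t <= 0) ->
  forall t : R, 0 <= t <= 1 -> g t <= g 0.
Proof.
move=> hd hneg t /andP[t0 t1].
apply: (@ler0_derive1_nincr R g 0 1) => //.
- by move=> x; rewrite in_itv /= => hx; rewrite derive1E derive_val; exact: hneg.
- apply: derivable_within_continuous => x _; by case: (hd x).
Qed.

Lemma line_is_derive n (W : normedModType R) (F : 'rV[R]_n -> W) z d t :
  derivable F (z + t *: d) d ->
  is_derive t 1 (fun s : R => F (z + s *: d)) ('D_d F (z + t *: d)).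
Proof.
have E : (fun h : R => h^-1 *: (((fun s : R => F (z + s *: d)) \o shift t) (h *: 1) - F (z + t *: d)))
   = (fun h : R => h^-1 *: ((F \o shift (z + t *: d)) (h *: d) - F (z + t *: d))).
  apply/funext => h /=; congr (_ *: (F _ - _)).
  have -> : h *: (1:R) = h by rewrite /GRing.scale /= mulr1.
  by rewrite scalerDl addrCA.
move=> hF; apply: DeriveDef.
  by rewrite /derivable E.
by rewrite /derive E.
Qed.
End AN.

Section D.
Context {R : realType} {n : nat}.

Lemma descent_f (f : 'rV[R]_n -> R) gf z d (Lc : R) :
  (forall v, differentiable f v) -> (forall v u, 'd f v u = dot (gf v) u) ->
  (forall t : R, 0 < t < 1 -> dot (gf (z + t *: d) - gf z) d <= Lc * t * norm2 d ^+ 2) ->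
  f (z + d) <= f z + dot (gf z) d + Lc / 2 * norm2 d ^+ 2.
Proof.
move=> df hdf hL.
set A := dot (gf z) d; set D := norm2 d ^+ 2.
pose g := (fun s : R => f (z + s *: d)) + (fun s : R => (- A) * s + (- (Lc/2 * D)) * (s * s)).
have hg : forall t : R, is_derive t (1:R) g (dot (gf (z + t *: d)) d + (- A + - (Lc/2*D) * (2*t))).
  move=> t; apply: is_deriveD; last exact: quad_derive.
  apply: is_derive_eq; first exact/line_is_derive/diff_derivable.
  by rewrite deriveE // hdf.
have E1 : g 1 = f (z + 1 *: d) + (- A * 1 + - (Lc / 2 * D) * (1 * 1)) by [].
have E0 : g 0 = f (z + 0 *: d) + (- A * 0 + - (Lc / 2 * D) * (0 * 0)) by [].
move: (@decr _ _ _ hg) => /(_ _ 1); rewrite E1 E0 scale1r scale0r addr0.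
move=> H; suff : f (z + d) + (- A * 1 + - (Lc / 2 * D) * (1 * 1)) <= f z + (- A * 0 + - (Lc / 2 * D) * (0 * 0)) by lra.
apply: H; last by rewrite ler01 lexx.
move=> t /andP[t0 t1]; have := hL t (ltac:(by rewrite t0 t1)).
rewrite dotBl -/A -/D => h.
have -> : - A + - (Lc / 2 * D) * (2 * t) = - A - Lc * t * D by field.
lra.
Qed.

Lemma dot_line_derive (gpsi : 'rV[R]_n -> 'rV[R]_n) (Hpsi : 'rV[R]_n -> 'M[R]_n) z d (t : R) :
  (forall v, differentiable gpsi v) -> (forall v u, 'd gpsi v u = u *m (Hpsi v)^T) ->
  is_derive t (1:R) (fun s : R => dot (gpsi (z + s *: d)) d)
    (dot (d *m (Hpsi (z + t *: d))^T) d).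
Proof.
move=> dg hdg.
set G := fun s : R => gpsi (z + s *: d).
have hG : is_derive t (1:R) G (d *m (Hpsi (z + t *: d))^T).
  apply: is_derive_eq; first exact/line_is_derive/diff_derivable.
  by rewrite deriveE // hdg.
have hc : forall j, is_derive t (1:R) (fun s => G s ord0 j) ((d *m (Hpsi (z + t *: d))^T) ord0 j).
  move=> j; have dG := @ex_derive _ _ _ _ _ _ _ hG.
  apply: DeriveDef; first exact: ((derivable_mxP _ _ _).1 dG ord0 j).
  have := derive_mx dG; rewrite derive_val => /matrixP /(_ ord0 j) h. rewrite h.
  by rewrite mxE.
have -> : (fun s : R => dot (G s) d) = \sum_(j < n) (d ord0 j \*: (fun s => G s ord0 j)).
  apply/funext => s; rewrite fct_sumE /dot; apply: eq_bigr => j _ /=.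
  by rewrite mulrC.
apply: is_derive_eq.
by rewrite /dot; apply: eq_bigr => j _; rewrite mulrC.
Qed.

Lemma descent_psi (psi : 'rV[R]_n -> R) gpsi (Hpsi : 'rV[R]_n -> 'M[R]_n) z d (M : R) :
  (forall v, differentiable psi v) -> (forall v u, 'd psi v u = dot (gpsi v) u) ->
  (forall v, differentiable gpsi v) -> (forall v u, 'd gpsi v u = u *m (Hpsi v)^T) ->
  (forall t : R, 0 < t < 1 -> dot (d *m (Hpsi (z + t *: d))^T) d <= M) ->
  psi (z + d) <= psi z + dot (gpsi z) d + M / 2.
Proof.
move=> dp hdp dg hdg hM.
set A := dot (gpsi z) d.
pose k := (fun s : R => dot (gpsi (z + s *: d)) d) + (fun s : R => (- M) * s + 0 * (s * s)).
have hk : forall t : R, is_derive t (1:R) k (dot (d *m (Hpsi (z + t *: d))^T) d + (- M + 0 * (2*t))).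
  move=> t; apply: is_deriveD; last exact: quad_derive.
  exact: dot_line_derive.
have k1 : forall t : R, 0 <= t <= 1 -> dot (gpsi (z + t *: d)) d - M * t <= A.
  move=> t ht; have := @decr _ _ _ hk _ _ ht.
  have Et : k t = dot (gpsi (z + t *: d)) d + (- M * t + 0 * (t * t)) by [].
  have E0 : k 0 = dot (gpsi (z + 0 *: d)) d + (- M * 0 + 0 * (0 * 0)) by [].
  rewrite Et E0 scale0r addr0 -/A.
  move=> H; suff : dot (gpsi (z + t *: d)) d + (- M * t + 0 * (t * t)) <= A + (- M * 0 + 0 * (0 * 0)) by lra.
  apply: H => s /andP[s0 s1]; have := hM s (ltac:(by rewrite s0 s1)); lra.
pose g := (fun s : R => psi (z + s *: d)) + (fun s : R => (- A) * s + (- (M/2)) * (s * s)).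
have hg : forall t : R, is_derive t (1:R) g (dot (gpsi (z + t *: d)) d + (- A + - (M/2) * (2*t))).
  move=> t; apply: is_deriveD; last exact: quad_derive.
  apply: is_derive_eq; first exact/line_is_derive/diff_derivable.
  by rewrite deriveE // hdp.
have E1 : g 1 = psi (z + 1 *: d) + (- A * 1 + - (M / 2) * (1 * 1)) by [].
have E0 : g 0 = psi (z + 0 *: d) + (- A * 0 + - (M / 2) * (0 * 0)) by [].
move: (@decr _ _ _ hg) => /(_ _ 1); rewrite E1 E0 scale1r scale0r addr0.
move=> H; suff : psi (z + d) + (- A * 1 + - (M / 2) * (1 * 1)) <= psi z + (- A * 0 + - (M / 2) * (0 * 0)) by lra.
apply: H; last by rewrite ler01 lexx.
move=> t /andP[t0 t1]; have := k1 t (ltac:(by rewrite (ltW t0) (ltW t1))); lra.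
Qed.
End D.

Section OP.
Context {R : realType} {n N : nat} (blk : 'I_n -> 'I_N).

Lemma norm2_0 : norm2 (0 : 'rV[R]_n) = 0.
Proof. by rewrite /norm2 dot0l sqrtr0. Qed.

Lemma dot_blockP_le i (w : 'rV[R]_n) : dot (blockP blk i w) (blockP blk i w) <= dot w w.
Proof.
apply: ler_sum => j _; rewrite !mxE; case: ifP => _ //.
by rewrite mulr0 -expr2 sqr_ge0.
Qed.

Lemma mul_bound (B : 'M[R]_n) (v : 'rV[R]_n) :
  norm2 v <= 1 ->
  dot (v *m B) (v *m B) <= \sum_(j < n) dot (\row_k B k j) (\row_k B k j).
Proof.
move=> hv; apply: ler_sum => j _.
have e : (v *m B) ord0 j = dot v (\row_k B k j).
  by rewrite mxE /dot; apply: eq_bigr => k _; rewrite mxE.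
rewrite -expr2 e -norm2_sq.
set b := \row_k B k j.
have h1 := CS v b.
have h2 := CS (- v) b.
rewrite dotNl (_ : norm2 (- v) = norm2 v) in h2; last first.
  by rewrite -scaleN1r norm2Z normrN1 mul1r.
have hb := norm2_ge0 b; have hv0 := norm2_ge0 v.
have h3 : norm2 v * norm2 b <= norm2 b by rewrite ler_piMl.
have h5 := le_trans h1 h3; have h6 := le_trans h2 h3.
set x := dot v b in h5 h6 *; set y := norm2 b in hb h5 h6 *.
have h4 : 0 <= (y - x) * (y + x) by apply: mulr_ge0; lra.
nra.
Qed.

Lemma opnorm_ub i (A : 'M[R]_n) :
  has_ubound [set norm2 (blockP blk i (v *m A^T)) | v in
        [set v : 'rV[R]_n | blockP blk i v = v /\ norm2 v <= 1]].
Proof.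
set C := \sum_(j < n) dot (\row_k A^T k j) (\row_k A^T k j).
exists (Num.sqrt C) => _ [v [_ hv] <-].
apply: sq_le; first exact: sqrtr_ge0.
rewrite norm2_sq sqr_sqrtr; last by rewrite /C; apply: sumr_ge0 => j _; exact: dot_ge0.
apply: le_trans (dot_blockP_le _ _) _.
exact: mul_bound.
Qed.

Lemma opnorm_bound i (A : 'M[R]_n) d : blockP blk i d = d ->
  norm2 (blockP blk i (d *m A^T)) <= blk_opnorm blk i A * norm2 d.
Proof.
move=> hd.
have [d0|d0] := eqVneq (norm2 d) 0.
  have : dot d d = 0 by rewrite -norm2_sq d0 expr2 mul0r.
  move/dot_eq0 => ->; rewrite mul0mx.
  rewrite (_ : blockP blk i 0 = 0); last by apply/matrixP => a b; rewrite !mxE; case: ifP.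
  by rewrite norm2_0 mulr0.
have rp : 0 < norm2 d by rewrite lt_def d0 norm2_ge0.
set v := (norm2 d)^-1 *: d.
have hv : blockP blk i v = v by rewrite blockPZ hd.
have nv : norm2 v = 1.
  by rewrite norm2Z ger0_norm ?invr_ge0 ?norm2_ge0 // mulVf.
have : norm2 (blockP blk i (v *m A^T)) <= blk_opnorm blk i A.
  apply: ub_le_sup; first exact: opnorm_ub.
  by exists v => //; split => //; rewrite nv.
rewrite /v -scalemxAl blockPZ norm2Z ger0_norm ?invr_ge0 ?norm2_ge0 //.
move=> h; rewrite mulrC -ler_pdivrMl //.
Qed.
End OP.

Section P.
Context {R : realType}.

Lemma powle (a b : R) m : 0 <= a -> a <= b -> a ^+ m <= b ^+ m.
Proof. by move=> a0 ab; apply: lerXn2r => //; rewrite nnegrE //; apply: le_trans ab. Qed.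

Lemma pow_convex (a b : R) p : 0 <= a -> 0 <= b ->
  (a + b) ^+ p.+1 <= 2 ^+ p * (a ^+ p.+1 + b ^+ p.+1).
Proof.
move=> a0 b0; elim: p => [|p IH]; first by rewrite expr0 mul1r !expr1.
have key : (a + b) * (a ^+ p.+1 + b ^+ p.+1) <= 2 * (a ^+ p.+2 + b ^+ p.+2).
  have : 0 <= (a ^+ p.+1 - b ^+ p.+1) * (a - b).
    have [ab|ba] := leP a b.
      apply: mulr_le0; rewrite subr_le0 //; exact: powle.
    apply: mulr_ge0; rewrite subr_ge0; [apply: powle => //|]; exact: ltW.
  rewrite !exprS; nra.
have ab0 : 0 <= a + b by rewrite addr_ge0.
rewrite exprS (le_trans (ler_wpM2l ab0 IH)) //.
have -> : (a + b) * (2 ^+ p * (a ^+ p.+1 + b ^+ p.+1)) = 2 ^+ p * ((a + b) * (a ^+ p.+1 + b ^+ p.+1)) by ring.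
have -> : 2 ^+ p.+1 * (a ^+ p.+2 + b ^+ p.+2) = 2 ^+ p * (2 * (a ^+ p.+2 + b ^+ p.+2)) by rewrite exprS; ring.
by apply: ler_wpM2l; first by rewrite exprn_ge0.
Qed.

Lemma lim_arg (G K : R) : 0 < K -> (forall u, 0 < u <= 1 -> G + K <= K * u / 2) -> G + K <= 0.
Proof.
move=> K0 H; rewrite leNgt; apply/negP => e0.
set e := G + K in e0 H.
have eK : 0 < e + K by rewrite addr_gt0.
set u := e / (e + K).
have hu' : u * (e + K) = e by rewrite /u divfK // gt_eqF.
have u0 : 0 < u by rewrite divr_gt0.
have u1 : u <= 1 by rewrite ler_pdivrMr // mul1r lerDl ltW.
have := H u (ltac:(by rewrite u0 u1)).
move=> h.
have h2 : e * (e + K) <= K * u / 2 * (e + K) by rewrite ler_pM2r.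
nra.
Qed.
End P.

Section S.
Context {R : realType} {n N : nat} (blk : 'I_n -> 'I_N).

Lemma inner_step (f psi : 'rV[R]_n -> R) gf gpsi (Hpsi : 'rV[R]_n -> 'M[R]_n)
  (i : 'I_N) z d (Lz eta alpha Hps : R) p' :
  (forall v, differentiable f v) -> (forall v u, 'd f v u = dot (gf v) u) ->
  (forall v, differentiable psi v) -> (forall v u, 'd psi v u = dot (gpsi v) u) ->
  (forall v, differentiable gpsi v) -> (forall v u, 'd gpsi v u = u *m (Hpsi v)^T) ->
  (forall h, blockP blk i h = h -> norm2 (blockP blk i (gf (z + h) - gf z)) <= Lz * norm2 h) ->
  0 < Hps ->
  (forall y, blk_opnorm blk i (Hpsi y) <= Hps * norm2 y ^+ p'.+1) ->
  blockP blk i d = d ->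
  0 < eta -> 0 <= alpha ->
  let g := blockP blk i (gf z + gpsi z) in
  let Hf := (Lz + eta) / 2 in
  let c := 2 ^+ p' * Hps in
  let HF := c * norm2 z ^+ p'.+1 + c * alpha ^+ p'.+1 + Hf in
  c * alpha ^+ p'.+2 + (c * norm2 z ^+ p'.+1 + Hf) * alpha = norm2 g ->
  (forall s : R, 0 <= s <= 1 ->
     dot g d + HF / 2 * norm2 d ^+ 2 <= dot g (s *: d) + HF / 2 * norm2 (s *: d) ^+ 2) ->
  f (z + d) + psi (z + d) <= f z + psi z - eta / 2 * norm2 d ^+ 2.
Proof.
move=> df hdf dp hdp dg hdg hLip Hps0 hHess hd eta0 alpha0 g Hf c HF halpha hopt.
have [d0|dn0] := eqVneq (norm2 d) 0.
  have : dot d d = 0 by rewrite -norm2_sq d0 expr2 mul0r.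
  move/dot_eq0 => ->; rewrite !addr0 norm2_0 expr2 !mul0r mulr0 subr0 //.
have nd0 : 0 < norm2 d by rewrite lt_def dn0 norm2_ge0.
set nd := norm2 d in nd0 dn0 *.
set D := nd ^+ 2.
have D0 : 0 < D by rewrite exprn_gt0.
have Lz0 : 0 <= Lz.
  have := hLip d hd; have := norm2_ge0 (blockP blk i (gf (z + d) - gf z)).
  rewrite -/nd; nra.
have c0 : 0 < c by rewrite mulr_gt0 // exprn_gt0.
set nz := norm2 z.
have nz0 : 0 <= nz := norm2_ge0 z.
have zp0 : 0 <= nz ^+ p'.+1 by rewrite exprn_ge0.
have ap0 : 0 <= alpha ^+ p'.+1 by rewrite exprn_ge0.
have HF0 : 0 < HF.
  rewrite /HF /Hf; have := mulr_ge0 (ltW c0) zp0; have := mulr_ge0 (ltW c0) ap0; lra.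
set G := dot g d.
have hG : G + HF * D <= 0.
  apply: lim_arg; first by rewrite mulr_gt0.
  move=> u /andP[u0 u1].
  have := hopt (1 - u) (ltac:(apply/andP; split; lra)).
  rewrite /G dotZr norm2Z ger0_norm; last by lra.
  rewrite -/G -/nd -/D exprMn -/D => h.
  have h2 : u * (G + HF * D - HF * D * u / 2) <= 0.
    have -> : u * (G + HF * D - HF * D * u / 2) =
      (G + HF / 2 * D) - ((1 - u) * G + HF / 2 * ((1 - u) ^+ 2 * D)) by field.
    by rewrite subr_le0.
  have : G + HF * D - HF * D * u / 2 <= 0 by rewrite -(pmulr_rle0 _ u0).
  lra.
have hng : norm2 g = alpha * HF.
  by rewrite -halpha /HF !exprS; ring.
have hDa : D <= alpha ^+ 2.
  have := dot_ge0 (g + HF *: d).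
  rewrite dotDl !dotDr !dotZl !dotZr -!norm2_sq (dotC d g) -/G hng -/nd -/D => h.
  have h1 : HF * G <= - HF * (HF * D).
    have := ler_wpM2l (ltW HF0) hG; rewrite mulr0 mulrDr; lra.
  have h3 : 0 <= HF ^+ 2 * (alpha ^+ 2 - D).
    have -> : HF ^+ 2 * (alpha ^+ 2 - D) = (alpha * HF) ^+ 2 - HF ^+ 2 * D by ring.
    move: h h1; rewrite !expr2; nra.
  have : 0 <= alpha ^+ 2 - D by rewrite -(pmulr_rge0 _ (exprn_gt0 2 HF0)).
  lra.
have hnd : nd <= alpha by apply: sq_le.
have hf := @descent_f R n f gf z d Lz df hdf.
have hf' : f (z + d) <= f z + dot (gf z) d + Lz / 2 * D.
  apply: hf => t /andP[t0 t1].
  rewrite (dot_blockP blk i _ _ hd) (le_trans (CS _ _)) //.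
  have := hLip (t *: d) (ltac:(by rewrite blockPZ hd)).
  rewrite norm2Z (ger0_norm (ltW t0)) -/nd => h.
  have := ler_wpM2r (ltW nd0) h; rewrite /D expr2; lra.
set M := c * (nz ^+ p'.+1 + nd ^+ p'.+1) * D.
have hp := @descent_psi R n psi gpsi Hpsi z d M dp hdp dg hdg.
have hp' : psi (z + d) <= psi z + dot (gpsi z) d + M / 2.
  apply: hp => t /andP[t0 t1].
  rewrite (dot_blockP blk i _ _ hd) (le_trans (CS _ _)) //.
  have h1 := opnorm_bound blk i (Hpsi (z + t *: d)) _ hd.
  have h2 := hHess (z + t *: d).
  have h3 : norm2 (z + t *: d) <= nz + nd.
    rewrite (le_trans (norm2D _ _)) // norm2Z (ger0_norm (ltW t0)) -/nd -/nz.
    by rewrite lerD2l ger_pMl // ltW.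
  have h4 := powle _ _ p'.+1 (norm2_ge0 _) h3.
  have h5 := pow_convex _ _ p' nz0 (ltW nd0).
  have e1 := ler_wpM2r (ltW nd0) h1.
  have e2 := ler_wpM2r (ltW D0) h2.
  have e3 := ler_wpM2l (ltW Hps0) (le_trans h4 h5).
  rewrite -/nd in e1 *; rewrite /M /c.
  apply: (le_trans e1); rewrite -[X in X <= _]mulrA -expr2 -/D.
  apply: (le_trans e2).
  have -> : 2 ^+ p' * Hps * (nz ^+ p'.+1 + nd ^+ p'.+1) * D =
    (Hps * (2 ^+ p' * (nz ^+ p'.+1 + nd ^+ p'.+1))) * D by ring.
  by apply: ler_wpM2r; first by rewrite exprn_ge0 // ltW.
have hsplit : dot (gf z) d + dot (gpsi z) d = G.
  by rewrite /G /g -(dot_blockP blk i _ _ hd) dotDl.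
have hM : M <= c * (nz ^+ p'.+1 + alpha ^+ p'.+1) * D.
  rewrite /M; apply: ler_wpM2r; first exact: ltW.
  apply: ler_wpM2l; first exact: ltW.
  by rewrite lerD2l; apply: powle; first exact: ltW.
move: hG; rewrite /HF /Hf => hG.
have hcz := mulr_ge0 (mulr_ge0 (ltW c0) (addr_ge0 zp0 ap0)) (ltW D0).
nra.
Qed.
End S.

Section M.
Context {R : realType} {n N : nat} (blk : 'I_n -> 'I_N).

Lemma inner0 (x : nat -> 'rV[R]_n) k : inner blk x k 0 = x k.
Proof. by apply/matrixP => a j; rewrite (ord1 a) mxE ltn0. Qed.

Lemma innerN (x : nat -> 'rV[R]_n) k : inner blk x k N = x k.+1.
Proof. by apply/matrixP => a j; rewrite (ord1 a) mxE ltn_ord. Qed.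

Lemma inner_succ (x : nat -> 'rV[R]_n) k m (Hm : (m < N)%N) :
  inner blk x k m.+1 = inner blk x k m + blockP blk (Ordinal Hm) (x k.+1 - x k).
Proof.
apply/matrixP => a j; rewrite (ord1 a) !mxE.
have -> : (blk j == Ordinal Hm) = (nat_of_ord (blk j) == m) by [].
case: (ltngtP (blk j) m) => h.
- by rewrite ltnS ltnW // addr0.
- by rewrite ltnS leqNgt h /= addr0.
- by rewrite h ltnSn addrC subrK.
Qed.

Lemma blk_add i (u w : 'rV[R]_n) :
  blockP blk i (u + blockP blk i (w - u)) = blockP blk i w.
Proof. by rewrite blockPD blockPid blockPB addrC subrK. Qed.

Lemma blk_add_ne i j (u w : 'rV[R]_n) : j != i ->
  blockP blk j (u + blockP blk i w) = blockP blk j u.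
Proof. by move=> ji; rewrite blockPD blockP_ne // addr0. Qed.

Lemma sum_split (F : 'I_N -> R) m (Hm : (m < N)%N) :
  \sum_(i < N | (i < m.+1)%N) F i = \sum_(i < N | (i < m)%N) F i + F (Ordinal Hm).
Proof.
rewrite (bigD1 (Ordinal Hm)) //= addrC; congr (_ + _).
apply: eq_bigl => i; rewrite ltnS leq_eqVlt.
have -> : (i != Ordinal Hm) = (nat_of_ord i != m) by [].
by case: (ltngtP i m) => h; rewrite ?h ?orbT ?orbF //= ?andbF // h eqxx.
Qed.
End M.

Theorem lemma1 (R : realType) (n N : nat) (blk : 'I_n -> 'I_N)
  (f psi : 'rV[R]_n -> R) (gf gpsi : 'rV[R]_n -> 'rV[R]_n)
  (Hpsi : 'rV[R]_n -> 'M[R]_n)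
  (L : 'I_N -> 'rV[R]_n -> R) (p : nat) (Hps : 'I_N -> R)
  (Qi : 'I_N -> set 'rV[R]_n)
  (x : nat -> 'rV[R]_n) (eta alpha : nat -> 'I_N -> R) :
  (* (A.1) f differentiable with gradient gf; blockwise Lipschitz gradient,
     with constant L i depending only on the blocks other than i *)
  (forall v, differentiable f v) ->
  (forall v u, 'd f v u = dot (gf v) u) ->
  (forall i v w, v - blockP blk i v = w - blockP blk i w -> L i v = L i w) ->
  (forall i v h, blockP blk i h = h ->
     norm2 (blockP blk i (gf (v + h) - gf v)) <= L i v * norm2 h) ->
  (* (A.2) psi is C^2 with gradient gpsi and Hessian Hpsi; block Hessian bound *)
  (forall v, differentiable psi v) ->
  (forall v u, 'd psi v u = dot (gpsi v) u) ->
  (forall v, differentiable gpsi v) ->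
  (forall v u, 'd gpsi v u = u *m (Hpsi v)^T) ->
  continuous Hpsi ->
  (1 <= p)%N ->
  (forall i, 0 < Hps i) ->
  (forall i y, blk_opnorm blk i (Hpsi y) <= Hps i * norm2 y ^+ p) ->
  (* (A.3) Q = prod_i Q_i nonempty closed convex, Q_i depends only on block i *)
  (forall i v w, blockP blk i v = blockP blk i w -> (Qi i v <-> Qi i w)) ->
  (exists v, Qprod Qi v) ->
  closed (Qprod Qi) ->
  convex_set_R (Qprod Qi) ->
  (* (A.4) F has a minimizer *)
  (exists xs, forall y, (Fobj f psi (Qprod Qi) xs <= Fobj f psi (Qprod Qi) y)%E) ->
  (* Algorithm CPGD *)
  Qprod Qi (x 0%N) ->
  (forall k i,
     let z := inner blk x k (nat_of_ord i) in
     let g := blockP blk i (gf z + gpsi z) in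
     let Hf := (L i z + eta k i) / 2 in
     let c := 2 ^+ p.-1 * Hps i in
     let HF := c * norm2 z ^+ p + c * alpha k i ^+ p + Hf in
     let d := blockP blk i (x k.+1 - x k) in
     [/\ 0 < eta k i,
         0 <= alpha k i,
         c * alpha k i ^+ p.+1 + (c * norm2 z ^+ p + Hf) * alpha k i = norm2 g,
         Qi i (x k + d) &
         forall d', blockP blk i d' = d' -> Qi i (x k + d') ->
           dot g d + HF / 2 * norm2 d ^+ 2 <= dot g d' + HF / 2 * norm2 d' ^+ 2]) ->
  forall k : nat,
    (Fobj f psi (Qprod Qi) (x k.+1) <=
     Fobj f psi (Qprod Qi) (x k) - (eta_min eta / 2 * norm2 (x k.+1 - x k) ^+ 2)%:E)%E.
Proof.
move=> df hdf _ hLip dp hdp dg hdg _ p1 Hps0 hHess Qblk _ _ hconv _ x0Q hstep k.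
case: p p1 hHess hstep => [//|p'] _ hHess hstep.
set Q := Qprod Qi.
have xQ : forall k, Q (x k).
  elim=> [//|m IH] i.
  have [_ _ _ hq _] := hstep m i.
  by apply/(Qblk i _ (x m + blockP blk i (x m.+1 - x m))) => //; rewrite blk_add.
have FQ : forall y, Q y -> Fobj f psi Q y = (f y + psi y)%:E.
  by move=> y Qy; rewrite /Fobj asboolT // adde0.
rewrite !FQ ?xQ // -EFinB lee_fin.
have etam : forall i, eta_min eta <= eta k i.
  move=> i; apply: ge_inf; last by exists (k, i).
  exists 0 => _ [[a b] _ <-]; have [e0 _ _ _ _] := hstep a b; exact: ltW.
set w := x k.+1 - x k.
set Dn := fun i : 'I_N => norm2 (blockP blk i w) ^+ 2.
have key : forall m, (m <= N)%N ->
  f (inner blk x k m) + psi (inner blk x k m) <=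
  f (x k) + psi (x k) - eta_min eta / 2 * \sum_(i < N | (i < m)%N) Dn i.
  elim=> [_|m IH hm].
    by rewrite inner0 big_pred0 // mulr0 subr0.
  have Hm : (m < N)%N by [].
  rewrite (inner_succ blk x k m Hm) (sum_split _ _ Hm).
  set i0 := Ordinal Hm.
  have := IH (ltnW hm).
  set z := inner blk x k m.
  have [eta0 alpha0 halpha hq hopt] := hstep k i0.
  have st := @inner_step R n N blk f psi gf gpsi Hpsi i0 z (blockP blk i0 w)
     (L i0 z) (eta k i0) (alpha k i0) (Hps i0) p' df hdf dp hdp dg hdg
     (fun h hh => hLip i0 z h hh) (Hps0 i0) (hHess i0) (blockPid _ _ _) eta0 alpha0 halpha.
  have st' : f (z + blockP blk i0 w) + psi (z + blockP blk i0 w) <=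
      f z + psi z - eta k i0 / 2 * norm2 (blockP blk i0 w) ^+ 2.
    apply: st => s /andP[s0 s1].
    apply: hopt; first by rewrite blockPZ blockPid.
    set d := blockP blk i0 w.
    have Qd : Q (x k + d).
      move=> j; have [->|ji] := eqVneq j i0; first exact: hq.
      apply/(Qblk j _ (x k)); first by rewrite blk_add_ne.
      exact: xQ.
    have := hconv _ _ s Qd (xQ k) (ltac:(by rewrite s0 s1)).
    have -> : s *: (x k + d) + (1 - s) *: x k = x k + s *: d.
      by apply/matrixP => a b; rewrite !mxE; ring.
    by move/(_ i0).
  have Dn0 : 0 <= Dn i0 by rewrite /Dn exprn_ge0 // norm2_ge0.
  have := ler_wpM2r Dn0 (etam i0).
  rewrite /Dn -/w in Dn0 *.
  move=> he h; lra.
have := key N (leqnn N).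
rewrite innerN.
have -> : \sum_(i < N | (i < N)%N) Dn i = norm2 (x k.+1 - x k) ^+ 2.
  rewrite (eq_bigl xpredT) ?big_mkcond //=; last by move=> i; rewrite ltn_ord.
  by rewrite norm2_sq -(sum_blocks blk); apply: eq_bigr => i _; rewrite /Dn norm2_sq.
by [].
Qed.
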